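(* Consider the decentralized setting of the context. Assume that whenever $(j,s)\in\mathcal S^i_t$ one has $|\mathcal S^j_s|<|\mathcal S^i_t|$, that the maximum delay is bounded by $\tau$, and that all loss functions $f^i_t$ are $G$-Lipschitz with respect to $\|\cdot\|$. Then for any $p\in\mathcal X$ with $h(p)\le r^2$, D-DDA with stepsizes \[\eta^i_t=\frac{r}{G\sqrt{(5\tau+3)\big(|\mathcal S^i_t|+(\tau+1)M_{\max}\big)M_{\max}}}\] guarantees a collective regret $R^{g}_T(p)=O\big(\sqrt{\tau N M_{\max}}\big)$, for any choice of reference indices $j_t$.
   Context: Let $\mathcal V$ be a finite-dimensional real vector space with norm $\|\cdot\|$ and dual norm $\|\cdot\|_*$, and $\mathcal X\subset\mathcal V$ closed convex. A regularizer $h:\mathcal V\to\mathbb R\cup\{+\infty\}$ is lower semicontinuous, $1$-strongly convex w.r.t. $\|\cdot\|$ on $\mathcal X$, with $\mathcal X\subset\operatorname{dom}h$, whose subdifferential admits a continuous selection, and $h\ge0$. Decentralized protocol: at each time $t=1,\dots,T$, $M_t\ge1$ agents are active, labelled $1,\dots,M_t$; agent $i$ plays $x^i_t\in\mathcal X$ against a convex loss $f^i_t$ (with $\mathcal X\subset\operatorname{dom}\partial f^i_t$) and the subgradient $g^i_t\in\partial f^i_t(x^i_t)$ is later shared. $\mathcal S^i_t\subset\{(j,s):1\le s\le t-1,\ 1\le j\le M_s\}$ is the set of (agent, time) indices of the feedback used for playing $x^i_t$. D-DDA: $x^i_t=\arg\min_{x\in\mathcal X}\{\sum_{(j,s)\in\mathcal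 S^i_t}\langle g^j_s,x\rangle+h(x)/\eta^i_t\}$. Maximum delay bounded by $\tau$: for all $t$, $i$, every $s\le t-\tau-1$ and $j\le M_s$, $(j,s)\in\mathcal S^i_t$. $M_{\max}=\max_tM_t$, $N=\sum_{t=1}^TM_t$. Collective regret with reference agents $j_t\in\{1,\dots,M_t\}$: $R^{g}_T(p)=\sum_{t=1}^T\sum_{i=1}^{M_t}f^i_t(x^{j_t}_t)-\sum_{t=1}^T\sum_{i=1}^{M_t}f^i_t(p)$. *)

(* Defs.v *)
From HB Require Import structures.
From mathcomp Require Import all_boot all_order all_algebra.
From mathcomp Require Import reals constructive_ereal.
Set Implicit Arguments. Unset Strict Implicit. Unset Printing Implicit Defensive.
Import Order.TTheory GRing.Theory Num.Theory.
Local Open Scope ring_scope.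

Section Defs.
Variables (R : realType) (n : nat).
Notation V := 'rV[R]_n.

(* The finite-dimensional space V is modelled as R^n (row vectors); the dual
   space is identified with V through the standard pairing. *)
Definition dot (g x : V) : R := \sum_(k < n) g 0 k * x 0 k.

Definition is_norm (nrm : V -> R) : Prop :=
  [/\ forall x, 0 <= nrm x,
      forall x, nrm x = 0 -> x = 0,
      forall (a : R) x, nrm (a *: x) = `|a| * nrm x
    & forall x y, nrm (x + y) <= nrm x + nrm y].

Definition convex_set (X : V -> Prop) : Prop :=
  forall x y (l : R), X x -> X y -> 0 <= l <= 1 -> X (l *: x + (1 - l) *: y).

Definition closed_set (nrm : V -> R) (X : V -> Prop) : Prop :=
  forall x, (forall e : R, 0 < e -> exists y, X y /\ nrm (x - y) < e) -> X x.

Definition lsc (nrm : V -> R) (h : V -> \bar R) : Prop :=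
  forall x (a : R), (a%:E < h x)%E ->
    exists d : R, 0 < d /\ forall y, nrm (y - x) < d -> (a%:E < h y)%E.

(* 1-strong convexity of h on X w.r.t. nrm (h is finite on X) *)
Definition strongly_convex_on (nrm : V -> R) (X : V -> Prop) (h : V -> \bar R) :=
  forall x y (l : R), X x -> X y -> 0 <= l <= 1 ->
    (h (l *: x + (1 - l) *: y)%R <=
       (l * fine (h x) + (1 - l) * fine (h y)
        - l * (1 - l) / 2 * nrm (x - y) ^+ 2)%R%:E)%E.

Definition subgrad_ext (h : V -> \bar R) (x s : V) : Prop :=
  forall y, (h x + (dot s (y - x)%R)%:E <= h y)%E.

Definition cont_selection (nrm : V -> R) (X : V -> Prop) (h : V -> \bar R) :=
  exists sel : V -> V,
    let Xo := fun x => X x /\ exists s, subgrad_ext h x s in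
    (forall x, Xo x -> subgrad_ext h x (sel x)) /\
    (forall x, Xo x -> forall e : R, 0 < e -> exists d : R, 0 < d /\
       forall y, Xo y -> nrm (y - x) < d -> nrm (sel y - sel x) < e).

Definition regularizer (nrm : V -> R) (X : V -> Prop) (h : V -> \bar R) :=
  [/\ lsc nrm h, strongly_convex_on nrm X h,
      (forall x, X x -> (h x < +oo)%E),
      cont_selection nrm X h
    & forall x, (0 <= h x)%E].

Definition convex_fun (f : V -> R) : Prop :=
  forall x y (l : R), 0 <= l <= 1 ->
    f (l *: x + (1 - l) *: y) <= l * f x + (1 - l) * f y.

Definition lipschitz (nrm : V -> R) (G : R) (f : V -> R) : Prop :=
  forall x y, `|f x - f y| <= G * nrm (x - y).

Definition subgrad (f : V -> R) (x g : V) : Prop :=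
  forall y, f x + dot g (y - x) <= f y.

End Defs.

(* Protocol bookkeeping: times t = 1..T, agents i = 1..M t.
   S i t : pred (nat * nat) is the set of pairs (j, s) used by agent i at t. *)

Definition valid_pairs (M : nat -> nat) (t : nat) (js : nat * nat) : bool :=
  (1 <= js.2 <= t.-1)%N && (1 <= js.1 <= M js.2)%N.

Definition cardS (M : nat -> nat) (S : nat -> nat -> pred (nat * nat))
  (i t : nat) : nat :=
  (\sum_(1 <= s < t) \sum_(1 <= j < (M s).+1) (S i t (j, s) : nat))%N.

Definition feedback_sum (R : realType) (n : nat) (M : nat -> nat)
  (S : nat -> nat -> pred (nat * nat)) (g : nat -> nat -> 'rV[R]_n)
  (i t : nat) : 'rV[R]_n :=
  \sum_(1 <= s < t) \sum_(1 <= j < (M s).+1) (if S i t (j, s) then g j s else 0).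

Definition Mmax (M : nat -> nat) (T : nat) : nat :=
  (\max_(1 <= t < T.+1) M t)%N.

Definition Ntot (M : nat -> nat) (T : nat) : nat :=
  (\sum_(1 <= t < T.+1) M t)%N.

Definition collective_regret (R : realType) (n : nat) (T : nat) (M : nat -> nat)
  (f : nat -> nat -> 'rV[R]_n -> R) (x : nat -> nat -> 'rV[R]_n)
  (jt : nat -> nat) (p : 'rV[R]_n) : R :=
  \sum_(1 <= t < T.+1) \sum_(1 <= i < (M t).+1) (f i t (x (jt t) t) - f i t p).

(* Main.v *)
Require Import Defs.
From HB Require Import structures.
From mathcomp Require Import all_boot all_order all_algebra.
From mathcomp Require Import reals constructive_ereal.
From mathcomp Require Import classical_sets.
From mathcomp Require Import ring lra zify.
Import Order.TTheory GRing.Theory Num.Theory.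
Local Open Scope ring_scope.
Set Implicit Arguments. Unset Strict Implicit.

Section Core.
Variables (R : realType) (n : nat).
Notation V := 'rV[R]_n.

Lemma dotDr (w x y : V) : dot w (x + y) = dot w x + dot w y.
Proof. by rewrite /dot -big_split /=; apply: eq_bigr => k _; rewrite mxE mulrDr. Qed.
Lemma dotZr (w x : V) a : dot w (a *: x) = a * dot w x.
Proof. by rewrite /dot mulr_sumr; apply: eq_bigr => k _; rewrite mxE mulrCA. Qed.
Lemma dotNr (w x : V) : dot w (- x) = - dot w x.
Proof. by rewrite -scaleN1r dotZr mulN1r. Qed.
Lemma dotBr (w x y : V) : dot w (x - y) = dot w x - dot w y.
Proof. by rewrite dotDr dotNr. Qed.
Lemma dotDl (w1 w2 x : V) : dot (w1 + w2) x = dot w1 x + dot w2 x.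
Proof. by rewrite /dot -big_split /=; apply: eq_bigr => k _; rewrite mxE mulrDl. Qed.
Lemma dotZl (w x : V) a : dot (a *: w) x = a * dot w x.
Proof. by rewrite /dot mulr_sumr; apply: eq_bigr => k _; rewrite mxE mulrA. Qed.
Lemma dotNl (w x : V) : dot (- w) x = - dot w x.
Proof. by rewrite -scaleN1r dotZl mulN1r. Qed.
Lemma dot0l (x : V) : dot 0 x = 0.
Proof. by rewrite /dot big1 // => k _; rewrite mxE mul0r. Qed.
Lemma dot_suml (I : Type) (r : seq I) (P : pred I) (F : I -> V) x :
  dot (\sum_(i <- r | P i) F i) x = \sum_(i <- r | P i) dot (F i) x.
Proof.
elim/big_rec2: _ => [|i a b _ <-]; first exact: dot0l.
by rewrite dotDl.
Qed.

Variables (nrm : V -> R) (X : V -> Prop) (h : V -> \bar R).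
Hypotheses (Hn : is_norm nrm) (HX : convex_set X) (Hh : regularizer nrm X h).
Definition hr (y : V) : R := fine (h y).

Lemma nrm_ge0 v : 0 <= nrm v. Proof. by case: Hn. Qed.
Lemma nrmN v : nrm (- v) = nrm v.
Proof. by case: Hn => _ _ Hs _; rewrite -scaleN1r Hs normrN1 mul1r. Qed.
Lemma nrm_sym x y : nrm (x - y) = nrm (y - x).
Proof. by rewrite -nrmN opprB. Qed.
Lemma nrm_tri x y : nrm (x + y) <= nrm x + nrm y. Proof. by case: Hn. Qed.

Lemma hr_ge0 y : 0 <= hr y.
Proof. by case: Hh => _ _ _ _ H; apply: fine_ge0. Qed.

Lemma hE y : X y -> h y = (hr y)%:E.
Proof.
move=> Xy; case: Hh => _ _ Hf _ H0; rewrite /hr fineK //.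
by rewrite ge0_fin_numE // Hf.
Qed.

Lemma hr_sc x y l : X x -> X y -> 0 <= l <= 1 ->
  hr (l *: x + (1 - l) *: y) <= l * hr x + (1 - l) * hr y - l * (1 - l) / 2 * nrm (x - y) ^+ 2.
Proof.
move=> Xx Xy Hl; case: Hh => _ Hsc _ _ _.
have := Hsc x y l Xx Xy Hl; rewrite hE; last exact: HX.
by rewrite lee_fin.
Qed.

Lemma approx_sc (w z : V) (b eps : R) : 0 < b -> X z ->
  (forall y, X y -> dot w z + hr z / b <= dot w y + hr y / b + eps) ->
  forall y, X y -> dot w z + hr z / b + nrm (y - z) ^+ 2 / (4 * b) - 2 * eps
     <= dot w y + hr y / b.
Proof.
move=> b0 Xz Hz y Xy.
set m := (1/2 : R) *: y + (1 - 1/2) *: z.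
have Xm : X m by apply: HX => //; rewrite divr_ge0 //= ler_pdivrMr // mul1r ler1n.
have H1 := Hz m Xm.
have l12 : 0 <= (1/2 : R) <= 1 by rewrite divr_ge0 //= ler_pdivrMr // mul1r ler1n.
have H2 := hr_sc Xy Xz l12.
have H3 : hr m / b <= ((1/2) * hr y + (1 - 1/2) * hr z - (1/2) * (1 - 1/2) / 2 * nrm (y - z) ^+ 2) / b.
  by rewrite ler_pM2r ?invr_gt0.
have Hd : dot w m = (1/2) * dot w y + (1 - 1/2) * dot w z by rewrite dotDr !dotZr.
have -> : nrm (y - z) ^+ 2 / (4 * b) = ((1/2) * (1 - 1/2) / 2 * nrm (y - z) ^+ 2) / b * 2.
  by field; rewrite lt0r_neq0.
have E1 : ((1/2) * hr y + (1 - 1/2) * hr z - (1/2) * (1 - 1/2) / 2 * nrm (y - z) ^+ 2) / b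
   = (1/2) * (hr y / b) + (1/2) * (hr z / b) - ((1/2) * (1 - 1/2) / 2 * nrm (y - z) ^+ 2) / b.
  by field; rewrite lt0r_neq0.
rewrite E1 in H3; rewrite Hd in H1.
lra.
Qed.

Definition dualb (w : V) (E : R) := forall v, dot w v <= E * nrm v.

Lemma dualb_low w E v : dualb w E -> - (E * nrm v) <= dot w v.
Proof. by move=> H; have := H (- v); rewrite dotNr nrmN lerNl. Qed.

Lemma dualbD w1 w2 E1 E2 : dualb w1 E1 -> dualb w2 E2 -> dualb (w1 + w2) (E1 + E2).
Proof. by move=> H1 H2 v; rewrite dotDl mulrDl lerD. Qed.
Lemma dualbZ w E a : 0 <= a -> dualb w E -> dualb (a *: w) (a * E).
Proof. by move=> a0 H v; rewrite dotZl -mulrA ler_wpM2l. Qed.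
Lemma dualbN w E : dualb w E -> dualb (- w) E.
Proof. by move=> H v; rewrite dotNl -dotNr -(nrmN v). Qed.
Lemma dualb0 : dualb 0 0.
Proof. by move=> v; rewrite dot0l mul0r. Qed.
Lemma dualb_le w E E' : E <= E' -> dualb w E -> dualb w E'.
Proof. by move=> le H v; apply: le_trans (H v) _; rewrite ler_wpM2r // nrm_ge0. Qed.
Lemma dualb_sum (I : Type) (r : seq I) (P : pred I) (F : I -> V) (E : I -> R) :
  (forall i, P i -> dualb (F i) (E i)) ->
  dualb (\sum_(i <- r | P i) F i) (\sum_(i <- r | P i) E i).
Proof.
move=> H; elim: r => [|i r IH]; first by rewrite !big_nil; exact: dualb0.
rewrite !big_cons; case: ifP => // Pi; exact: dualbD (H _ Pi) IH.
Qed.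



Lemma sq_helper (D d b : R) : 0 < b -> D * d - d ^+ 2 / (4 * b) <= b * D ^+ 2.
Proof.
move=> b0.
have -> : D * d - d ^+ 2 / (4 * b) = b * D ^+ 2 - (d - 2 * b * D) ^+ 2 / (4 * b).
  by field; rewrite lt0r_neq0.
have : 0 <= (d - 2 * b * D) ^+ 2 / (4 * b) by rewrite divr_ge0 ?sqr_ge0 // mulr_ge0 // ltW.
lra.
Qed.

Lemma compare (u U x z : V) (eta b eps s E : R) : 0 < eta -> 0 < b -> X x -> X z ->
  0 <= eps -> 0 < s -> 4 * b * eps <= s ^+ 2 -> 0 <= E ->
  (forall y, X y -> dot u x + hr x / eta <= dot u y + hr y / eta) ->
  (forall y, X y -> dot U z + hr z / b <= dot U y + hr y / b + eps) ->
  dualb (eta *: u - b *: U) E -> nrm (x - z) <= 2 * E + s.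
Proof.
move=> e0 b0 Xx Xz eps0 s0 Hs E0 Hx Hz HE.
have H1 := approx_sc e0 Xx (fun y Xy => (ler_wpDr (lexx 0) (Hx y Xy))) Xz.
have H2 := approx_sc b0 Xz Hz Xx.
have H1' : eta * (dot u x + hr x / eta + nrm (z - x) ^+ 2 / (4 * eta) - 2 * 0)
   <= eta * (dot u z + hr z / eta) by rewrite ler_pM2l.
have H2' : b * (dot U z + hr z / b + nrm (x - z) ^+ 2 / (4 * b) - 2 * eps)
   <= b * (dot U x + hr x / b) by rewrite ler_pM2l.
have E1 : eta * (dot u x + hr x / eta + nrm (z - x) ^+ 2 / (4 * eta) - 2 * 0)
   = eta * dot u x + hr x + nrm (x - z) ^+ 2 / 4.
  by rewrite nrm_sym; field; rewrite lt0r_neq0.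
have E2 : eta * (dot u z + hr z / eta) = eta * dot u z + hr z.
  by field; rewrite lt0r_neq0.
have E3 : b * (dot U z + hr z / b + nrm (x - z) ^+ 2 / (4 * b) - 2 * eps)
   = b * dot U z + hr z + nrm (x - z) ^+ 2 / 4 - 2 * b * eps.
  by field; rewrite lt0r_neq0.
have E4 : b * (dot U x + hr x / b) = b * dot U x + hr x.
  by field; rewrite lt0r_neq0.
rewrite E1 E2 in H1'; rewrite E3 E4 in H2'.
have H3 := HE (z - x).
rewrite dotDl dotNl !dotZl !dotBr nrm_sym in H3.
set d := nrm (x - z) in H1' H2' H3 *.
have d0 : 0 <= d by apply: nrm_ge0.
have Hq : d ^+ 2 <= 2 * E * d + s ^+ 2 by nra.
nra.
Qed.

Lemma exists_approx (w p0 : V) (b eps L : R) : 0 < b -> 0 < eps -> X p0 ->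
  (forall y, X y -> L <= dot w y + hr y / b) ->
  exists z, X z /\ forall y, X y -> dot w z + hr z / b <= dot w y + hr y / b + eps.
Proof.
move=> b0 e0 Xp HL.
pose E := fun r : R => exists2 y, X y & r = - (dot w y + hr y / b).
have hs : has_sup E.
  split; first by exists (- (dot w p0 + hr p0 / b)); exists p0.
  exists (- L) => r [y Xy ->]; rewrite lerN2; exact: HL.
have [r [z Xz ->] Hr] := sup_adherent e0 hs.
exists z; split => // y Xy.
have : - (dot w y + hr y / b) <= sup E by apply: sup_upper_bound => //; exists y.
lra.
Qed.

Lemma ftrl (T : nat) (Gv : nat -> V) (D b : nat -> R) (z : nat -> V) (p : V) (eps : R) :
  (forall t, (1 <= t <= T)%N -> dualb (Gv t) (D t)) ->
  (forall t, (1 <= t <= T.+1)%N -> 0 < b t) ->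
  (forall t, (1 <= t <= T)%N -> b t.+1 <= b t) ->
  (forall t, (1 <= t <= T)%N -> X (z t) /\ forall y, X y ->
      dot (\sum_(1 <= s < t) Gv s) (z t) + hr (z t) / b t
        <= dot (\sum_(1 <= s < t) Gv s) y + hr y / b t + eps) ->
  X p ->
  \sum_(1 <= t < T.+1) dot (Gv t) (z t - p)
    <= hr p / b T.+1 + \sum_(1 <= t < T.+1) (b t * D t ^+ 2 + 2 * eps).
Proof.
move=> HD Hb Hbm Hz Xp.
pose U t := \sum_(1 <= s < t) Gv s.
pose Psi t y := dot (U t) y + hr y / b t.
pose w t := if (t <= T)%N then z t else p.
have Xw : forall t, (1 <= t)%N -> X (w t).
  move=> t t1; rewrite /w; case: ifP => // tT; by case: (Hz t); first by rewrite t1.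
have step : forall t, (1 <= t < T.+1)%N ->
    dot (Gv t) (w t) <= Psi t.+1 (w t.+1) - Psi t (w t) + (b t * D t ^+ 2 + 2 * eps).
  move=> t /andP[t1 tT].
  have tT' : (1 <= t <= T)%N by rewrite t1 -ltnS.
  have wt : w t = z t by rewrite /w -ltnS tT.
  rewrite wt.
  set y := w t.+1.
  have Xy : X y by apply: Xw.
  have HU : U t.+1 = U t + Gv t by rewrite /U big_nat_recr.
  have bt0 : 0 < b t by apply: Hb; rewrite t1 /= ltnW.
  have bt10 : 0 < b t.+1 by apply: Hb; rewrite /= ltnS -ltnS.
  have Hh1 : hr y / b t <= hr y / b t.+1.
    by rewrite ler_wpM2l ?hr_ge0 // lef_pV2 ?posrE // Hbm.
  have H1 : Psi t y + dot (Gv t) y <= Psi t.+1 y.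
    by rewrite /Psi HU dotDl; lra.
  have [Xz Hzt] := Hz t tT'.
  have H2 := approx_sc bt0 Xz Hzt Xy.
  have H3 := HD t tT' (z t - y).
  rewrite dotBr nrm_sym in H3.
  have H4 := sq_helper (D t) (nrm (y - z t)) bt0.
  rewrite /Psi /U in H1 *; lra.
rewrite (eq_big_nat _ _ (F2 := fun t => dot (Gv t) (w t) - dot (Gv t) p)); last first.
  by move=> t /andP[t1 tT]; rewrite dotBr /w -ltnS tT.
rewrite sumrB.
have -> : \sum_(1 <= i < T.+1) dot (Gv i) p = dot (U T.+1) p by rewrite /U dot_suml.
have Hs := ler_sum_nat step.
rewrite /= big_split /= telescope_sumr // in Hs.
have HP1 : 0 <= Psi 1%N (w 1%N).
  rewrite /Psi /U big_geq // dot0l add0r divr_ge0 ?hr_ge0 // ltW //; exact: Hb.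
have HT : Psi T.+1 (w T.+1) = dot (U T.+1) p + hr p / b T.+1 by rewrite /Psi /w ltnn.
rewrite HT in Hs; lra.
Qed.



Lemma lower_bound (u U x : V) (eta b E : R) : 0 < eta -> 0 < b -> X x ->
  (forall y, X y -> dot u x + hr x / eta <= dot u y + hr y / eta) ->
  dualb (eta *: u - b *: U) E ->
  exists L, forall y, X y -> L <= dot U y + hr y / b.
Proof.
move=> e0 b0 Xx Hx HE.
pose F := dot u x + hr x / eta.
exists ((eta * F - dot (eta *: u - b *: U) x - E ^+ 2) / b) => y Xy.
have H1 := approx_sc e0 Xx (fun y Xy => (ler_wpDr (lexx 0) (Hx y Xy))) Xy.
set d := nrm (y - x) in H1.
have H1' : eta * (F + d ^+ 2 / (4 * eta) - 2 * 0) <= eta * (dot u y + hr y / eta).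
  by rewrite ler_pM2l.
have E1 : eta * (F + d ^+ 2 / (4 * eta) - 2 * 0) = eta * F + d ^+ 2 / 4.
  by field; rewrite lt0r_neq0.
have E2 : eta * (dot u y + hr y / eta) = eta * dot u y + hr y.
  by field; rewrite lt0r_neq0.
rewrite E1 E2 in H1'.
have H3 := HE (y - x).
rewrite dotBr in H3; rewrite -/d in H3.
have Hq : E * d - d ^+ 2 / 4 <= E ^+ 2.
  have := sq_helper E d (ltr01 : (0:R) < 1); rewrite mulr1 mul1r; lra.
rewrite ler_pdivrMr //.
have -> : (dot U y + hr y / b) * b = dot U y * b + hr y by field; rewrite lt0r_neq0.
have : dot (eta *: u - b *: U) y = eta * dot u y - dot U y * b.
  by rewrite dotDl dotNl !dotZl [b * _]mulrC.
lra.
Qed.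

End Core.

Section Step.
Variables (R : realType) (r G a k m : R).
Hypotheses (r0 : 0 < r) (G0 : 0 < G) (a0 : 0 < a) (k1 : 1 <= k) (m1 : 1 <= m).

Ltac hyps := have r0c := r0; have G0c := G0; have a0c := a0; have k1c := k1; have m1c := m1.
Definition stp (A : R) := r / (G * Num.sqrt (a * (A + k * m) * m)).
Definition cst := r / (G * Num.sqrt a * Num.sqrt m).

Lemma km_gt0 : 0 < k * m.
Proof. by rewrite mulr_gt0 //; [apply: lt_le_trans k1 | apply: lt_le_trans m1]. Qed.

Lemma stpE (A : R) : 0 <= A -> stp A = cst / Num.sqrt (A + k * m).
Proof.
hyps.
move=> A0; have := km_gt0 => kmp.
rewrite /stp /cst sqrtrM; last by apply: mulr_ge0; lra.
rewrite sqrtrM; last by lra.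
have : 0 < Num.sqrt a by rewrite sqrtr_gt0.
have : 0 < Num.sqrt m by rewrite sqrtr_gt0; lra.
have : 0 < Num.sqrt (A + k * m) by rewrite sqrtr_gt0; lra.
move=> h1 h2 h3; field.
by rewrite !lt0r_neq0.
Qed.

Lemma cst_gt0 : 0 < cst.
Proof.
hyps.
rewrite /cst divr_gt0 // !mulr_gt0 // sqrtr_gt0 //; lra.
Qed.

Lemma stp_gt0 (A : R) : 0 <= A -> 0 < stp A.
Proof.
hyps.
move=> A0; rewrite stpE // divr_gt0 ?cst_gt0 // sqrtr_gt0.
have := km_gt0; lra.
Qed.

Lemma stp_anti (A B : R) : 0 <= A -> A <= B -> stp B <= stp A.
Proof.
hyps.
move=> A0 AB; have := km_gt0 => kmp.
rewrite !stpE //; last by lra.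
rewrite ler_wpM2l ?(ltW cst_gt0) // lef_pV2 ?posrE ?sqrtr_gt0 //; try lra.
by rewrite ler_wsqrtr //; lra.
Qed.

Lemma stp_diff (A B : R) : 0 <= A -> A <= B -> (stp A - stp B) * A <= stp B * (B - A).
Proof.
hyps.
move=> A0 AB; have := km_gt0 => kmp.
rewrite !stpE //; last by lra.
set x := Num.sqrt (A + k * m); set y := Num.sqrt (B + k * m).
have x0 : 0 < x by rewrite sqrtr_gt0; lra.
have xy : x <= y by rewrite ler_wsqrtr //; lra.
have y0 : 0 < y by lra.
have ex : x ^+ 2 = A + k * m by rewrite sqr_sqrtr //; lra.
have ey : y ^+ 2 = B + k * m by rewrite sqr_sqrtr //; lra.
have c0 := cst_gt0.
have f0 : 0 <= cst / x - cst / y.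
  rewrite subr_ge0 ler_wpM2l ?(ltW c0) // lef_pV2 ?posrE //.
have H1 : (cst / x - cst / y) * A <= (cst / x - cst / y) * x ^+ 2.
  by rewrite ler_wpM2l // ex; lra.
have E1 : (cst / x - cst / y) * x ^+ 2 = cst / y * ((y - x) * x).
  by field; rewrite !lt0r_neq0.
have E2 : cst / y * (B - A) = cst / y * ((y - x) * (y + x)).
  by congr (_ * _); rewrite -[B](addrK (k * m)) -[A](addrK (k * m)) -ex -ey; ring.
rewrite E2; apply: le_trans H1 _; rewrite E1 ler_wpM2l //.
  by rewrite divr_ge0 // ltW.
by rewrite ler_wpM2l; lra.
Qed.

Lemma stp_sum_step (A d : R) : 0 <= A -> 0 < d -> d <= k * m ->
  d * stp A <= 2 * cst * (Num.sqrt (A + d) - Num.sqrt A).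
Proof.
hyps.
move=> A0 d0 dkm; have := km_gt0 => kmp.
rewrite stpE //.
set y := Num.sqrt (A + d); set x := Num.sqrt A.
have y0 : 0 < y by rewrite sqrtr_gt0; lra.
have x0 : 0 <= x by apply: sqrtr_ge0.
have ex : x ^+ 2 = A by rewrite sqr_sqrtr.
have ey : y ^+ 2 = A + d by rewrite sqr_sqrtr //; lra.
have c0 := cst_gt0.
have H1 : cst / Num.sqrt (A + k * m) <= cst / y.
  rewrite ler_wpM2l ?(ltW c0) // lef_pV2 ?posrE ?sqrtr_gt0 //; try lra.
  by rewrite ler_wsqrtr //; lra.
apply: le_trans (_ : d * (cst / y) <= _).
  by rewrite ler_wpM2l //; lra.
have -> : d * (cst / y) = cst * ((y ^+ 2 - x ^+ 2) / y).
  by rewrite ey ex; field; rewrite lt0r_neq0.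
have -> : 2 * cst * (y - x) = cst * (2 * (y - x)) by ring.
rewrite ler_wpM2l ?(ltW c0) // ler_pdivrMr //.
nra.
Qed.

End Step.

Lemma choice_nat (A : Type) (a0 : A) (P : nat -> A -> Prop) (N : nat) :
  (forall t, (t <= N)%N -> exists x, P t x) -> exists f, forall t, (t <= N)%N -> P t (f t).
Proof.
elim: N => [|N IH] H.
  have [x Hx] := H 0%N (leqnn 0); exists (fun _ => x) => t; rewrite leqn0 => /eqP ->; done.
have [f Hf] : exists f, forall t, (t <= N)%N -> P t (f t).
  by apply: IH => t tN; apply: H; rewrite (leq_trans tN).
have [x Hx] := H N.+1 (leqnn _).
exists (fun t => if t == N.+1 then x else f t) => t.
case: eqP => [-> //|tN le]; apply: Hf; lia.
Qed.

Lemma leq_sum_nat m k (F G : nat -> nat) :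
  (forall i, (m <= i < k)%N -> (F i <= G i)%N) ->
  (\sum_(m <= i < k) F i <= \sum_(m <= i < k) G i)%N.
Proof.
move=> H; rewrite big_nat_cond [X in (_ <= X)%N]big_nat_cond.
by apply: leq_sum => i /andP[Hi _]; exact: H.
Qed.

Lemma window_bound (t tau c : nat) (w : nat -> nat) :
  (forall s, (1 <= s < t)%N -> (w s <= c)%N) ->
  (forall s, (1 <= s)%N -> (s + tau + 1 <= t)%N -> w s = 0%N) ->
  (\sum_(1 <= s < t) w s <= tau * c)%N.
Proof.
move=> Hc H0.
case: (leqP t tau.+1) => tt.
  apply: (leq_trans (leq_sum_nat (fun s Hs => Hc s Hs))) => /=.
  rewrite sum_nat_const_nat leq_mul2r; apply/orP; right; lia.
rewrite (@big_cat_nat _ _ _ (t - tau)) /=; [|lia|lia].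
rewrite big_nat_cond big1 ?add0n; last first.
  move=> s /andP[/andP[s1 st] _]; apply: H0 => //; lia.
apply: (leq_trans (leq_sum_nat (fun s Hs => Hc s _))) => /=.
  move=> s; lia.
rewrite sum_nat_const_nat leq_mul2r; apply/orP; right; lia.
Qed.

Definition miss (M : nat -> nat) (S : nat -> nat -> pred (nat * nat)) (i t : nat) : nat :=
  (\sum_(1 <= s < t) \sum_(1 <= j < (M s).+1) (~~ S i t (j, s) : nat))%N.

Lemma count_split M S i t :
  (\sum_(1 <= s < t) M s = cardS M S i t + miss M S i t)%N.
Proof.
rewrite /cardS /miss -big_split /=; apply: eq_bigr => s _.
rewrite -big_split /= (eq_bigr (fun _ => 1%N)); last by move=> j _; case: (S i t (j, s)).
by rewrite sum_nat_const_nat subn1 /= muln1.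
Qed.

Section Sums.
Variable R : realType.
Lemma sum_if (I : Type) (r : seq I) (P : pred I) (A B : R) :
  \sum_(i <- r) (if P i then A else B)
  = A * (\sum_(i <- r) (P i : nat))%N%:R + B * (\sum_(i <- r) (~~ P i : nat))%N%:R.
Proof.
elim: r => [|x r IH]; first by rewrite !big_nil !mulr0 addr0.
rewrite !big_cons IH !natrD; case: (P x) => /=; rewrite ?mulr1 ?mulr0; ring.
Qed.

Lemma sum_lin (I : Type) (r : seq I) (A B : R) (Xf Yf : I -> nat) :
  \sum_(i <- r) (A * (Xf i)%:R + B * (Yf i)%:R)
  = A * (\sum_(i <- r) Xf i)%N%:R + B * (\sum_(i <- r) Yf i)%N%:R.
Proof. by rewrite big_split /= -!mulr_sumr !natr_sum. Qed.
End Sums.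

Lemma feedback_dualb (R : realType) (n : nat) (nrm : 'rV[R]_n -> R) M S
   (g : nat -> nat -> 'rV[R]_n) (i t : nat) (eta b G : R) :
  is_norm nrm -> b <= eta -> 0 <= b ->
  (forall j s, (1 <= s < t)%N -> (1 <= j <= M s)%N -> dualb nrm (g j s) G) ->
  dualb nrm (eta *: feedback_sum M S g i t
             - b *: \sum_(1 <= s < t) \sum_(1 <= j < (M s).+1) g j s)
     (G * ((eta - b) * (cardS M S i t)%:R + b * (miss M S i t)%:R)).
Proof.
move=> Hn be b0 Hg.
have -> : G * ((eta - b) * (cardS M S i t)%:R + b * (miss M S i t)%:R)
   = \sum_(1 <= s < t | (1 <= s < t)%N && true) \sum_(1 <= j < (M s).+1 | (1 <= j < (M s).+1)%N && true)
        (if S i t (j, s) then (eta - b) * G else b * G).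
  rewrite -big_nat_cond.
  under eq_bigr => s _ do rewrite -big_nat_cond sum_if.
  rewrite sum_lin /cardS /miss; ring.
rewrite /feedback_sum scaler_sumr [b *: _]scaler_sumr -sumrB big_nat_cond.
apply: dualb_sum => s /andP[Hs _].
rewrite scaler_sumr [b *: _]scaler_sumr -sumrB big_nat_cond.
apply: dualb_sum => j /andP[Hj _].
have Hgj := Hg j s Hs Hj.
case: (S i t (j, s)) => /=.
  rewrite -scalerBl; apply: dualbZ => //; lra.
rewrite scaler0 sub0r; apply: (dualbN Hn); apply: dualbZ => //.
Qed.

Lemma final_ineq (R : realType) (r G tt k m N Sg hp : R) :
  0 < r -> 0 < G -> 0 <= tt -> k = tt + 1 -> 1 <= m -> 0 <= N ->
  0 <= hp -> hp <= r ^+ 2 ->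
  Sg <= 2 * cst r G (5 * tt + 3) m * Num.sqrt N ->
  hp / stp r G (5 * tt + 3) k m N + (G ^+ 2 * m * (1 + 12 * tt)) * Sg
    <= 30 * r * G * Num.sqrt (k * m * (N + k * m)).
Proof.
move=> r0 G0 tt0 kE m1 N0 hp0 hpr HS.
set a := 5 * tt + 3.
have a0 : 0 < a by rewrite /a; lra.
have k1 : 1 <= k by lra.
have km0 : 0 <= k * m by apply: mulr_ge0; lra.
set sa := Num.sqrt a; set sk := Num.sqrt k; set sm := Num.sqrt m.
set sN := Num.sqrt N; set sQ := Num.sqrt (N + k * m).
have sa0 : 0 < sa by rewrite sqrtr_gt0.
have sk0 : 0 < sk by rewrite sqrtr_gt0; lra.
have sm0 : 0 < sm by rewrite sqrtr_gt0; lra.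
have sN0 : 0 <= sN by apply: sqrtr_ge0.
have km1 : 1 <= k * m by nra.
have sQp : 0 < sQ by rewrite sqrtr_gt0; lra.
have sQ0 : 0 <= sQ by apply: ltW.
have ea : sa ^+ 2 = a by rewrite sqr_sqrtr //; lra.
have ek : sk ^+ 2 = k by rewrite sqr_sqrtr //; lra.
have em : sm ^+ 2 = m by rewrite sqr_sqrtr //; lra.
have sNQ : sN <= sQ by rewrite ler_wsqrtr //; lra.
have sa3 : sa <= 3 * sk.
  have : sa ^+ 2 <= (3 * sk) ^+ 2 by rewrite exprMn ek ea /a; lra.
  rewrite ler_sqr ?nnegrE //; nra.
have ska : sk <= sa by rewrite ler_wsqrtr //; rewrite /a; lra.
have stpN : stp r G a k m N = r / (G * (sa * sQ * sm)).
  rewrite /stp -/a sqrtrM; last by apply: mulr_ge0; lra.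
  by rewrite sqrtrM //; lra.
have T1 : hp / stp r G a k m N <= 3 * sk * (r * G * sm * sQ).
  rewrite stpN.
  have -> : hp / (r / (G * (sa * sQ * sm))) = (hp / r) * (G * (sa * sQ * sm)).
    by field; rewrite !lt0r_neq0.
  have hr1 : hp / r <= r by rewrite ler_pdivrMr // -expr2.
  have : 0 <= G * (sa * sQ * sm) by rewrite !mulr_ge0 //; lra.
  move=> H0.
  apply: le_trans (ler_wpM2r H0 hr1) _.
  have : r * (G * (sa * sQ * sm)) = sa * (r * G * sm * sQ) by ring.
  move=> ->; rewrite ler_wpM2r //; first by rewrite !mulr_ge0 //; lra.
have c1 : (1 + 12 * tt) / sa <= 12 * sk.
  rewrite ler_pdivrMr //.
  have : 1 + 12 * tt <= 12 * sk ^+ 2 by rewrite ek; lra.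
  nra.
have T2 : (G ^+ 2 * m * (1 + 12 * tt)) * Sg <= 24 * sk * (r * G * sm * sQ).
  have f0 : 0 <= G ^+ 2 * m * (1 + 12 * tt) by rewrite !mulr_ge0 //; lra.
  apply: le_trans (ler_wpM2l f0 HS) _.
  have -> : G ^+ 2 * m * (1 + 12 * tt) * (2 * cst r G a m * sN)
     = 2 * ((1 + 12 * tt) / sa) * (r * G * sm * sN).
    rewrite /cst -/sa -/sm -em; field; rewrite !lt0r_neq0 //.
  have : 0 <= r * G * sm * sN by rewrite !mulr_ge0 //; lra.
  have : r * G * sm * sN <= r * G * sm * sQ by rewrite ler_wpM2l // !mulr_ge0 //; lra.
  have : 0 <= (1 + 12 * tt) / sa by rewrite divr_ge0 //; lra.
  move=> h1 h2 h3.
  have := ler_pM (mulr_ge0 (ler0n _ 2) h1) h3 (ler_wpM2l (ler0n _ 2) c1) h2.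
  lra.
have -> : Num.sqrt (k * m * (N + k * m)) = sk * sm * sQ.
  rewrite sqrtrM; last by apply: mulr_ge0; lra.
  by rewrite sqrtrM //; lra.
have : 0 <= sk * (r * G * sm * sQ) by rewrite !mulr_ge0 //; lra.
have -> : 30 * r * G * (sk * sm * sQ) = 30 * (sk * (r * G * sm * sQ)) by ring.
lra.
Qed.

Lemma sum_bound (R : realType) (r G a k m : R) (M : nat -> nat) (T : nat) :
  0 < r -> 0 < G -> 0 < a -> 1 <= k -> 1 <= m ->
  (forall t, (1 <= t <= T)%N -> (1 <= M t)%N /\ (M t)%:R <= k * m) ->
  \sum_(1 <= t < T.+1) (M t)%:R * stp r G a k m (\sum_(1 <= s < t.-1.+1) M s)%N%:R
    <= 2 * cst r G a m * Num.sqrt (\sum_(1 <= s < T.+1) M s)%N%:R.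
Proof.
move=> r0 G0 a0 k1 m1 HM.
pose f (t : nat) : R := Num.sqrt (\sum_(1 <= s < t.-1.+1) M s)%N%:R.
have H : forall t, (1 <= t < T.+1)%N ->
    (M t)%:R * stp r G a k m (\sum_(1 <= s < t.-1.+1) M s)%N%:R
    <= 2 * cst r G a m * (f t.+1 - f t).
  move=> t /andP[t1 tT].
  have [Mt1 Mtk] := HM t (introT andP (conj t1 tT)).
  have E : ((\sum_(1 <= s < t.-1.+1) M s)%N%:R + (M t)%:R : R)
           = (\sum_(1 <= s < t.+1.-1.+1) M s)%N%:R.
    by rewrite -natrD /= prednK // big_nat_recr.
  by rewrite /f -E; apply: stp_sum_step => //; rewrite ?ler0n // ?ltr0n.
have := ler_sum_nat H.
rewrite -mulr_sumr telescope_sumr // /f /= (big_geq (leqnn 1%N)) sqrtr0 subr0; exact.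
Qed.

Unset Implicit Arguments. Set Strict Implicit.

Lemma le_eps (R : realType) (x y : R) : (forall e : R, 0 < e -> x <= y + e) -> x <= y.
Proof. by move=> H; apply/ler_addgt0Pr => e e0; exact: H. Qed.

Theorem theorem4 (R : realType) :
  exists C : R, forall (n : nat) (nrm : 'rV[R]_n -> R) (X : 'rV[R]_n -> Prop)
    (h : 'rV[R]_n -> \bar R)
    (T : nat) (M : nat -> nat) (S : nat -> nat -> pred (nat * nat))
    (f : nat -> nat -> 'rV[R]_n -> R) (g x : nat -> nat -> 'rV[R]_n)
    (eta : nat -> nat -> R) (tau : nat) (G r : R) (p : 'rV[R]_n)
    (jt : nat -> nat),
  is_norm nrm -> closed_set nrm X -> convex_set X ->
  regularizer nrm X h ->
  (forall t, (1 <= t <= T)%N -> (1 <= M t)%N) ->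
  0 < G -> 0 < r ->
  (* the feedback sets only contain past (agent, time) indices *)
  (forall i t js, (1 <= t <= T)%N -> (1 <= i <= M t)%N ->
     S i t js -> valid_pairs M t js) ->
  (* |S^j_s| < |S^i_t| whenever (j,s) \in S^i_t *)
  (forall i t j s, (1 <= t <= T)%N -> (1 <= i <= M t)%N ->
     S i t (j, s) -> (cardS M S j s < cardS M S i t)%N) ->
  (* maximum delay bounded by tau *)
  (forall i t s j, (1 <= t <= T)%N -> (1 <= i <= M t)%N ->
     (1 <= s)%N -> (s + tau + 1 <= t)%N -> (1 <= j <= M s)%N -> S i t (j, s)) ->
  (* convex, G-Lipschitz losses and shared subgradients *)
  (forall i t, (1 <= t <= T)%N -> (1 <= i <= M t)%N ->
     [/\ convex_fun (f i t), lipschitz nrm G (f i t)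
       & subgrad (f i t) (x i t) (g i t)]) ->
  (* stepsizes *)
  (forall i t, (1 <= t <= T)%N -> (1 <= i <= M t)%N ->
     eta i t = r / (G * Num.sqrt ((5 * tau%:R + 3) *
                 ((cardS M S i t)%:R + (tau.+1)%:R * (Mmax M T)%:R) *
                 (Mmax M T)%:R))) ->
  (* D-DDA: x^i_t minimizes <sum of feedback, x> + h(x)/eta^i_t over X *)
  (forall i t, (1 <= t <= T)%N -> (1 <= i <= M t)%N ->
     X (x i t) /\
     forall y, X y ->
       dot (feedback_sum M S g i t) (x i t) + fine (h (x i t)) / eta i t <=
       dot (feedback_sum M S g i t) y + fine (h y) / eta i t) ->
  (* reference agents *)
  (forall t, (1 <= t <= T)%N -> (1 <= jt t <= M t)%N) ->
  X p -> (h p <= (r ^+ 2)%:E)%E ->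
  collective_regret T M f x jt p <=
    C * r * G * Num.sqrt ((tau.+1)%:R * (Mmax M T)%:R *
                          ((Ntot M T)%:R + (tau.+1)%:R * (Mmax M T)%:R)).
Proof.
exists 30.
move=> n nrm X h T M S f g x eta tau G r p jt Hn HXcl HX Hh HM G0 r0 Hval Hcard
  Hdel Hf Heta Hx Hjt Xp Hp.
rewrite /collective_regret.
have [->|Tn0] := eqVneq T 0%N.
  rewrite big_geq // mulr_ge0 ?sqrtr_ge0 // !mulr_ge0 //; lra.
have T1 : (1 <= T)%N by rewrite lt0n.
set mN := Mmax M T.
have HMle : forall t, (1 <= t <= T)%N -> (M t <= mN)%N.
  move=> t /andP[t1 tT]; rewrite /mN /Mmax.
  by apply: (@leq_bigmax_seq _ _ xpredT) => //; rewrite mem_index_iota ltnS t1.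
set m : R := mN%:R.
have m1 : 1 <= m.
  have H11 : (1 <= 1 <= T)%N by rewrite leqnn T1.
  by rewrite /m ler1n; apply: leq_trans (HMle 1%N H11); exact: HM.
set tt : R := tau%:R.
set a : R := 5 * tt + 3.
set k : R := (tau.+1)%:R.
have tt0 : 0 <= tt by rewrite ler0n.
have kE : k = tt + 1 by rewrite /k /tt -natr1.
have a0 : 0 < a by rewrite /a; lra.
have k1 : 1 <= k by lra.
pose P t := (\sum_(1 <= s < t.+1) M s)%N.
pose bt t := stp r G a k m (P t.-1)%:R.
pose Gv t := \sum_(1 <= i < (M t).+1) g i t.
pose U t := \sum_(1 <= s < t) Gv s.
have Heta' : forall i t, (1 <= t <= T)%N -> (1 <= i <= M t)%N ->
    eta i t = stp r G a k m (cardS M S i t)%:R.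
  by move=> i t Ht Hi; rewrite Heta.
have F1 : forall i t, (1 <= t <= T)%N -> (1 <= i <= M t)%N -> dualb nrm (g i t) G.
  move=> i t Ht Hi v; have [_ Hl Hs] := Hf i t Ht Hi.
  have H1 := Hs (x i t + v); have H2 := Hl (x i t + v) (x i t).
  have e : x i t + v - x i t = v by rewrite addrC addKr.
  rewrite e in H1 H2.
  have := ler_norm (f i t (x i t + v) - f i t (x i t)); lra.
have Hcnt : forall i t, (1 <= t)%N -> P t.-1 = (cardS M S i t + miss M S i t)%N.
  by move=> i t t1; rewrite /P prednK // (count_split M S i t).
have Hmiss : forall i t, (1 <= t <= T)%N -> (1 <= i <= M t)%N ->
    (miss M S i t <= tau * mN)%N.
  move=> i t Ht Hi; apply: window_bound.
    move=> s Hs.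
    apply: leq_trans (_ : _ <= \sum_(1 <= j < (M s).+1) 1)%N _.
      by apply: leq_sum_nat => j _; case: (S i t (j, s)).
    rewrite sum_nat_const_nat subn1 muln1 /=; apply: HMle.
    move: Hs Ht; lia.
  move=> s s1 st; rewrite big_nat_cond big1 // => j /andP[/andP[j1 jM] _].
  by rewrite Hdel // j1 -ltnS.
have P0 : P 0%N = 0%N by rewrite /P big_geq.
have HPmono : forall t, (1 <= t)%N -> (P t.-1 <= P t)%N.
  by move=> t t1; rewrite /P prednK // big_nat_recr //= leq_addr.
have bt_gt0 : forall t, 0 < bt t by move=> t; apply: stp_gt0 => //; rewrite ler0n.
have bt_le1 : forall t, bt t <= bt 1%N.
  by move=> t; apply: stp_anti => //; rewrite /= P0 ?ler0n // ler_nat.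
have bt_mono : forall t, (1 <= t)%N -> bt t.+1 <= bt t.
  by move=> t t1; apply: stp_anti => //; rewrite ?ler0n // ler_nat HPmono.
have Heb : forall i t, (1 <= t <= T)%N -> (1 <= i <= M t)%N -> bt t <= eta i t.
  move=> i t Ht Hi; rewrite Heta' //; apply: stp_anti => //; rewrite ?ler0n //.
  by rewrite ler_nat (Hcnt i) ?leq_addr //; case/andP: Ht.
have HE : forall i t, (1 <= t <= T)%N -> (1 <= i <= M t)%N ->
    dualb nrm (eta i t *: feedback_sum M S g i t - bt t *: U t) (2 * G * bt t * (tt * m)).
  move=> i t Ht Hi.
  have H := @feedback_dualb R n nrm M S g i t (eta i t) (bt t) G Hn (Heb i t Ht Hi)
    (ltW (bt_gt0 t)) (fun j s Hs Hj => F1 j s (ltac:(move: Hs Ht; lia)) Hj).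
  apply: (dualb_le Hn) H.
  have t1 : (1 <= t)%N by case/andP: Ht.
  have HP : (P t.-1)%:R = (cardS M S i t)%:R + (miss M S i t)%:R :> R
    by rewrite (Hcnt i t t1) natrD.
  have hcP : (cardS M S i t)%:R <= (P t.-1)%:R :> R by rewrite HP lerDl ler0n.
  have Hd := stp_diff r0 G0 a0 k1 m1 (ler0n _ (cardS M S i t)) hcP.
  have e : (P t.-1)%:R - (cardS M S i t)%:R = (miss M S i t)%:R :> R by rewrite HP; ring.
  rewrite -/(bt t) -Heta' // e in Hd.
  have Hm : (miss M S i t)%:R <= tt * m by rewrite /tt /m -natrM ler_nat Hmiss.
  have H2 : bt t * (miss M S i t)%:R <= bt t * (tt * m).
    by rewrite ler_wpM2l // ltW.
  have -> : 2 * G * bt t * (tt * m) = G * (2 * (bt t * (tt * m))) by ring.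
  rewrite ler_wpM2l ?(ltW G0) //.
  lra.
have Hpr : hr h p <= r ^+ 2 by move: Hp; rewrite (hE Hh Xp) lee_fin.
set Nn : R := (Ntot M T)%:R.
set A := G ^+ 2 * m * (1 + 12 * tt).
set Sg := \sum_(1 <= t < T.+1) (M t)%:R * bt t.
have HM' : forall t, (1 <= t <= T)%N -> (1 <= M t)%N /\ (M t)%:R <= k * m.
  move=> t Ht; split; first exact: HM.
  have : (M t)%:R <= m by rewrite /m ler_nat HMle.
  have : m <= k * m by rewrite ler_peMl //; lra.
  lra.
have HSg : Sg <= 2 * cst r G a m * Num.sqrt Nn by exact: (sum_bound r0 G0 a0 k1 m1 HM').
have btT : bt T.+1 = stp r G a k m Nn by [].
have Hfin := final_ineq r0 G0 tt0 kE m1 (ler0n _ _ : 0 <= Nn) (hr_ge0 Hh p) Hpr HSg.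
rewrite -btT -/A in Hfin.
have key : forall s : R, 0 < s -> s <= 1 ->
   \sum_(1 <= t < T.+1) \sum_(1 <= i < (M t).+1) (f i t (x (jt t) t) - f i t p)
   <= hr h p / bt T.+1 + A * Sg + (T%:R * (2 * (s ^+ 2 / (4 * bt 1%N))) + 3 * G * s * Nn).
  move=> s s0 s1.
  set eps := s ^+ 2 / (4 * bt 1%N).
  have eps0 : 0 < eps by rewrite divr_gt0 ?exprn_gt0 // mulr_gt0.
  have Hs4 : forall t, 4 * bt t * eps <= s ^+ 2.
    move=> t; rewrite /eps.
    have -> : 4 * bt t * (s ^+ 2 / (4 * bt 1%N)) = (bt t / bt 1%N) * s ^+ 2.
      by field; rewrite lt0r_neq0.
    have : bt t / bt 1%N <= 1 by rewrite ler_pdivrMr // mul1r.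
    have : 0 <= s ^+ 2 by apply: sqr_ge0.
    nra.
  have [z Hz] : exists z : nat -> 'rV[R]_n, forall t, (t <= T)%N -> (1 <= t)%N ->
     X (z t) /\ forall y, X y ->
       dot (U t) (z t) + hr h (z t) / bt t <= dot (U t) y + hr h y / bt t + eps.
    apply: (@choice_nat _ 0 (fun t zz => (1 <= t)%N -> X zz /\ forall y, X y ->
       dot (U t) zz + hr h zz / bt t <= dot (U t) y + hr h y / bt t + eps) T) => t tT.
    case: (posnP t) => [->|t1]; first by exists 0.
    have Ht : (1 <= t <= T)%N by rewrite t1.
    have H1 : (1 <= 1 <= M t)%N by rewrite leqnn HM.
    have e0 : 0 < eta 1%N t by rewrite Heta' // stp_gt0 // ler0n.
    have [Xx Hxm] := Hx 1%N t Ht H1.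
    have [L HL] := lower_bound HX Hh e0 (bt_gt0 t) Xx Hxm (HE 1%N t Ht H1).
    have [zz [Xz Hzz]] := exists_approx (bt_gt0 t) eps0 Xp HL.
    by exists zz => _.
  have Hd : forall i t, (1 <= t <= T)%N -> (1 <= i <= M t)%N ->
      nrm (x i t - z t) <= 4 * G * bt t * (tt * m) + s.
    move=> i t Ht Hi.
    have e0 : 0 < eta i t by rewrite Heta' // stp_gt0 // ler0n.
    have [Xx Hxm] := Hx i t Ht Hi.
    have [t1 tT] := andP Ht.
    have [Xz Hzz] := Hz t tT t1.
    have E0 : 0 <= 2 * G * bt t * (tt * m).
      have bp := bt_gt0 t.
      have m0 : 0 <= m by lra.
      exact: (mulr_ge0 (mulr_ge0 (mulr_ge0 (ler0n R 2) (ltW G0)) (ltW bp)) (mulr_ge0 tt0 m0)).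
    have := compare Hn HX Hh e0 (bt_gt0 t) Xx Xz (ltW eps0) s0 (Hs4 t) E0 Hxm Hzz (HE i t Ht Hi).
    lra.
  have PT : forall t i, (1 <= t <= T)%N -> (1 <= i <= M t)%N ->
     f i t (x (jt t) t) - f i t p
       <= dot (g i t) (z t - p) + 3 * G * (4 * G * bt t * (tt * m) + s).
    move=> t i Ht Hi.
    have [_ Hl Hs] := Hf i t Ht Hi.
    have dj := Hd (jt t) t Ht (Hjt t Ht).
    have di := Hd i t Ht Hi.
    have A1 : f i t (x (jt t) t) - f i t (x i t) <= G * nrm (x (jt t) t - x i t).
      exact: le_trans (ler_norm _) (Hl _ _).
    have A2 : nrm (x (jt t) t - x i t) <= nrm (x (jt t) t - z t) + nrm (x i t - z t).
      rewrite [nrm (x i t - z t)](nrm_sym Hn).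
      have -> : x (jt t) t - x i t = (x (jt t) t - z t) + (z t - x i t).
        by rewrite addrA subrK.
      exact: nrm_tri.
    have A3 := Hs p.
    have A4 : dot (g i t) (x i t - z t) <= G * nrm (x i t - z t) by apply: F1.
    have A5 : dot (g i t) (p - x i t) = - dot (g i t) (z t - p) - dot (g i t) (x i t - z t).
      rewrite !dotBr; ring.
    have A6 : G * nrm (x (jt t) t - x i t) <= G * (2 * (4 * G * bt t * (tt * m) + s)).
      rewrite ler_wpM2l ?(ltW G0) //; lra.
    have A7 : G * nrm (x i t - z t) <= G * (4 * G * bt t * (tt * m) + s).
      by rewrite ler_wpM2l ?(ltW G0).
    lra.
  pose c t := 3 * G * (4 * G * bt t * (tt * m) + s).
  have R1 : \sum_(1 <= t < T.+1) \sum_(1 <= i < (M t).+1) (f i t (x (jt t) t) - f i t p)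
      <= \sum_(1 <= t < T.+1) (dot (Gv t) (z t - p) + (M t)%:R * c t).
    apply: ler_sum_nat => t Ht.
    have Ht' : (1 <= t <= T)%N by move: Ht; rewrite ltnS.
    apply: le_trans (_ : _ <= \sum_(1 <= i < (M t).+1) (dot (g i t) (z t - p) + c t)) _.
      apply: ler_sum_nat => i Hi; apply: PT => //; by move: Hi; rewrite ltnS.
    by rewrite big_split /= /Gv dot_suml sumr_const_nat subn1 /= mulr_natl.
  have HD : forall t, (1 <= t <= T)%N -> dualb nrm (Gv t) (G * (M t)%:R).
    move=> t Ht; rewrite /Gv big_nat_cond.
    have -> : G * (M t)%:R = \sum_(1 <= i < (M t).+1 | (1 <= i < (M t).+1)%N && true) G.
      by rewrite -big_nat_cond sumr_const_nat subn1 /= mulr_natr.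
    apply: dualb_sum => i /andP[Hi _]; apply: (F1 i t Ht); by move: Hi; rewrite ltnS.
  have HZ : forall t, (1 <= t <= T)%N -> X (z t) /\ forall y, X y ->
      dot (\sum_(1 <= s < t) Gv s) (z t) + hr h (z t) / bt t
        <= dot (\sum_(1 <= s < t) Gv s) y + hr h y / bt t + eps.
    by move=> t /andP[t1 tT]; exact: Hz t tT t1.
  have HF := ftrl Hn HX Hh HD (fun t _ => bt_gt0 t)
     (fun t Ht => bt_mono t (proj1 (andP Ht))) HZ Xp.
  have R3 : \sum_(1 <= t < T.+1) (bt t * (G * (M t)%:R) ^+ 2 + 2 * eps)
      + \sum_(1 <= t < T.+1) (M t)%:R * c t
      <= A * Sg + (T%:R * (2 * eps) + 3 * G * s * Nn).
    rewrite -big_split /=.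
    apply: le_trans (_ : _ <= \sum_(1 <= t < T.+1)
       (A * ((M t)%:R * bt t) + 2 * eps + 3 * G * s * (M t)%:R)) _.
      apply: ler_sum_nat => t Ht.
      have Ht' : (1 <= t <= T)%N by move: Ht; rewrite ltnS.
      have Mm : (M t)%:R <= m by rewrite /m ler_nat HMle.
      have M0 : 0 <= (M t)%:R :> R by apply: ler0n.
      have M2 : (M t)%:R ^+ 2 <= m * (M t)%:R :> R.
        by rewrite expr2 ler_wpM2r.
      have bp := bt_gt0 t.
      have B0 : 0 <= bt t * G ^+ 2 by rewrite mulr_ge0 ?sqr_ge0 // ltW.
      have := ler_wpM2l B0 M2.
      rewrite /c /A; set bb := bt t; set MM := (M t)%:R.
      move=> H; lra.
    rewrite !big_split /= -!mulr_sumr sumr_const_nat subn1 /= /Nn /Ntot natr_sum.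
    rewrite -mulr_natl -/Sg /eps; lra.
  have := ler_sum_nat (fun t (_ : (1 <= t < T.+1)%N) => lexx (dot (Gv t) (z t - p))).
  move=> _.
  rewrite -/eps.
  apply: le_trans R1 _; rewrite big_split /=.
  lra.
apply: le_trans Hfin.
apply: le_eps => e e0.
have b1 := bt_gt0 1%N.
set b := bt 1%N in key b1.
have TQ0 : 0 <= T%:R / (2 * b) by rewrite divr_ge0 ?ler0n // mulr_ge0 // ltW.
have GN0 : 0 <= 3 * G * Nn by rewrite !mulr_ge0 ?ler0n // ltW.
set Q := T%:R / (2 * b) + 3 * G * Nn + 1.
have Q0 : 0 < Q by rewrite /Q; lra.
set s : R := e / (Q + e).
have s0 : 0 < s by rewrite divr_gt0 //; lra.
have s1 : s <= 1 by rewrite ler_pdivrMr ?mul1r; lra.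
have Hk := key s s0 s1.
have E1 : T%:R * (2 * (s ^+ 2 / (4 * b))) = (T%:R / (2 * b)) * s ^+ 2.
  by field; rewrite lt0r_neq0.
have ss : s ^+ 2 <= s by rewrite expr2; nra.
have H1 : (T%:R / (2 * b)) * s ^+ 2 <= (T%:R / (2 * b)) * s by rewrite ler_wpM2l.
have E2 : s * Q = e - e ^+ 2 / (Q + e).
  by rewrite /s; field; rewrite lt0r_neq0 //; lra.
have H2 : 0 <= e ^+ 2 / (Q + e) by rewrite divr_ge0 ?sqr_ge0 //; lra.
rewrite E1 in Hk.
have HsQ : s * Q = s * (T%:R / (2 * b)) + 3 * G * Nn * s + s by rewrite /Q; ring.
lra.
Qed.
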